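(* Let $X$ be a $T_1$ space and $\mathcal{P}$ an ideal of closed subsets of $X$. If $X$ is $\tau\mathcal{P}$-compact, then $X$ is $\tau\mathcal{P}$-pseudocompact.
   Context: An ideal of closed subsets of $X$ is a family $\mathcal{P}$ of closed subsets closed under finite unions and under passing to closed subsets. For $f\in\mathbb{R}^X$, $D_f$ is the set of discontinuity points of $f$; $C(X)_\mathcal{P}=\{f\in\mathbb{R}^X\colon\overline{D_f}\in\mathcal{P}\}$ and $C^*(X)_\mathcal{P}$ is the set of bounded members of $C(X)_\mathcal{P}$. For $f\in C(X)_\mathcal{P}$, $Z_\mathcal{P}(f)=\{x\colon f(x)=0\}$, and $Z_\mathcal{P}[X]$ is the set of all such zero sets. $X$ is $\tau\mathcal{P}$-compact if every family $\mathcal{F}\subseteq Z_\mathcal{P}[X]$ with the finite intersection property has nonempty intersection. $X$ is $\tau\mathcal{P}$-pseudocompact if $C(X)_\mathcal{P}=C^*(X)_\mathcal{P}$. *)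

(* Defs.v *)
From HB Require Import structures.
From mathcomp Require Import all_boot all_order all_algebra.
From mathcomp Require Import all_classical all_reals all_analysis.
Set Implicit Arguments. Unset Strict Implicit. Unset Printing Implicit Defensive.
Import Order.TTheory GRing.Theory Num.Theory numFieldNormedType.Exports.
Local Open Scope classical_set_scope.
Local Open Scope ring_scope.

Section Defs.
Context {X : topologicalType} {R : realType}.

Definition closed_ideal (P : set (set X)) : Prop :=
  [/\ (forall A, P A -> closed A),
      (forall A B, P A -> P B -> P (A `|` B)) &
      (forall A B, P A -> closed B -> B `<=` A -> P B)].

Definition discont (f : X -> R) : set X := [set x : X | ~ {for x, continuous f}].

Definition CP (P : set (set X)) (f : X -> R) : Prop := P (closure (discont f)).

Definition bounded_fun (f : X -> R) : Prop := exists M : R, forall x, `|f x| <= M.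

Definition ZP (P : set (set X)) : set (set X) :=
  [set Z | exists f, CP P f /\ Z = f @^-1` [set 0]].

Definition tauP_compact (P : set (set X)) : Prop :=
  forall F : set (set X), F `<=` ZP P -> finI F id ->
    (\bigcap_(A in F) A) !=set0.

(* tau P-pseudocompact: C(X)_P = C^*(X)_P *)
Definition tauP_pseudocompact (P : set (set X)) : Prop :=
  forall f : X -> R, CP P f -> bounded_fun f.
End Defs.

(* Main.v *)
Require Import Defs.
From mathcomp Require Import all_boot all_order all_algebra.
From mathcomp Require Import all_classical all_reals all_analysis.
From mathcomp Require Import finmap.
Import Order.TTheory GRing.Theory Num.Theory numFieldNormedType.Exports.
Local Open Scope classical_set_scope.
Local Open Scope ring_scope.

Lemma addnorm_eq0 (R : realType) (a : R) : (a + `|a| = 0) <-> a <= 0.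
Proof.
split.
- move=> h; case: (leP a 0) => // ha; move: h; rewrite gtr0_norm //.
  move=> h; have : 0 < a + a by rewrite addr_gt0.
  by rewrite h ltxx.
- by move=> ha; rewrite ler0_norm // subrr.
Qed.

Lemma bound_seq (X : Type) (Z : nat -> set X)
  (Zdec : forall m n, (m <= n)%N -> Z n `<=` Z m) (s : seq (set X)) :
  (forall A, A \in s -> exists n, A = Z n) ->
  exists n, forall A, A \in s -> Z n `<=` A.
Proof.
elim: s => [|a s IH] hs; first by exists 0%N.
have [m hm] : exists m, forall A, A \in s -> Z m `<=` A.
  by apply: IH => A h; apply: hs; rewrite in_cons h orbT.
have [k ->] : exists k, a = Z k by apply: hs; rewrite in_cons eqxx.
exists (maxn m k) => A; rewrite in_cons => /orP [/eqP ->|As].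
  by apply: Zdec; rewrite leq_maxr.
apply: subset_trans (hm A As); apply: Zdec; by rewrite leq_maxl.
Qed.

Theorem theorem4p2 (R : realType) (X : topologicalType) (P : set (set X)) :
  @accessible_space X -> closed_ideal P ->
  @tauP_compact X R P -> @tauP_pseudocompact X R P.
Proof.
have mem_head_or : forall (T : eqType) (a x : T) s, x \in s -> x \in a :: s.
  by move=> T a x s h; rewrite in_cons h orbT.
move=> _ [Pcl PU Psub] comp f Pf.
apply: contrapT => nb.
pose Z (n : nat) := [set x : X | n%:R <= `|f x|].
pose F := [set A : set X | exists n : nat, A = Z n].
have FZ : F `<=` @ZP X R P.
  move=> A [n ->].
  pose g := fun x => (n%:R - `|f x|) + `| n%:R - `|f x| | : R.
  exists g; split.
  - apply: (Psub _ _ Pf); first exact: closed_closure.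
    apply: closureS => x /= ng; apply: contra_not ng => cf.
    rewrite /g; apply: cvgD; first apply: cvgB; first exact: cvg_cst.
    + exact: cvg_norm.
    + apply: cvg_norm; apply: cvgB; first exact: cvg_cst.
      exact: cvg_norm.
  - rewrite /Z /g; apply/seteqP; split => x /=.
    + by move=> h; apply/addnorm_eq0; rewrite subr_le0.
    + by move/addnorm_eq0; rewrite subr_le0.
have fin : finI F id.
  move=> D' sD'.
  have [n hn] : exists n : nat, forall A, A \in enum_fset D' -> Z n `<=` A.
    apply: bound_seq.
      by move=> m k mk x /=; apply: le_trans; rewrite ler_nat.
    by move=> A /sD'; rewrite in_setE.
  have [x hx] : exists x, n%:R <= `|f x|.
    apply: contrapT => hne; apply: nb; exists n%:R => x.
    case: (leP `|f x| n%:R) => // h; exfalso; apply: hne; exists x; exact: ltW.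
  exists x => A /= AD; exact: (hn A AD).
have [x hx] := comp F FZ fin.
have h0 : 0 <= `|f x| by [].
have := archi_boundP h0; set k := Num.Def.archi_bound _ => hk.
have : Z k x by apply: hx; exists k.
by rewrite /Z /= leNgt hk.
Qed.
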